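(* Let $\mathbf t_1,\mathbf t_2$ be hyper-terms that agree on $\mathrm{supp}(\mathbf t_1)\cap\mathrm{supp}(\mathbf t_2)$, and $Q_1,Q_2$ post hyper-assertions such that $\mathrm{idx}(Q_1)\cap\mathrm{supp}(\mathbf t_2)\subseteq\mathrm{supp}(\mathbf t_1)$ and $\mathrm{idx}(Q_2)\cap\mathrm{supp}(\mathbf t_1)\subseteq\mathrm{supp}(\mathbf t_2)$. Then $$\mathrm{wp}\,\mathbf t_1\,\{Q_1\}\wedge\mathrm{wp}\,\mathbf t_2\,\{Q_2\}\ \vdash\ \mathrm{wp}\,(\mathbf t_1+\mathbf t_2)\,\{\lambda\mathbf r.\ Q_1(\mathbf r)\wedge Q_2(\mathbf r)\}.$$
   Context: Setting. $\mathrm{Val}=\mathbb{Z}$; $\mathrm{PVar}$ is a countably infinite set of program variables; a store is a function $s:\mathrm{PVar}\to\mathrm{Val}$; indices are $\mathrm{Idx}=\mathbb{N}$. Terms of a first-order imperative language are generated by $t ::= v \mid x \mid * \mid t\oplus t \mid \mathtt{skip}\mid x:=t \mid t;t \mid \mathtt{if}\ t\ \mathtt{then}\ t\ \mathtt{else}\ t \mid \mathtt{while}\ t\ \mathtt{do}\ t$, with a nondeterministic big-step semantics $t,s\Downarrow v,s'$. A hyper-term $\mathbf t$ is a finitely supported partial function from $\mathrm{Idx}$ to terms; a hyper-store is a total function $\mathbf s:\mathrm{Idx}\to\mathrm{Store}$; a hyper-return-value is a finitely supported partial function $\mathbf v:\mathrm{Idx}\rightharpoonup\mathrm{Val}$.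 For partial maps $\mathbf f,\mathbf g$ agreeing on the intersection of their supports, $\mathbf f+\mathbf g$ is their union. $\mathbf t,\mathbf s\Downarrow\mathbf v,\mathbf s'$ holds iff for every $i\in\mathrm{supp}(\mathbf t)$, $\mathbf t(i),\mathbf s(i)\Downarrow\mathbf v(i),\mathbf s'(i)$, and for every $i\notin\mathrm{supp}(\mathbf t)$, $\mathbf s'(i)=\mathbf s(i)$ and $\mathbf v(i)$ is undefined. A hyper-assertion is a predicate on hyper-stores; a post hyper-assertion is an upward-closed map $Q$ from hyper-return-values to hyper-assertions (if $Q(\mathbf v)(\mathbf s)$ and $\mathbf v'$ agrees with $\mathbf v$ on $\mathrm{supp}(\mathbf v)$ then $Q(\mathbf v')(\mathbf s)$). Entailment $P\vdash R$ means $\forall\mathbf s.\ P(\mathbf s)\Rightarrow R(\mathbf s)$. $\mathrm{wp}\,\mathbf t\,\{Q\}(\mathbf s):\iff\forall\mathbf v,\mathbf s'.\ (\mathbf t,\mathbf s\Downarrow\mathbf v,\mathbf s')\Rightarrow Q(\mathbf v)(\mathbf s')$. Indices of a post hyper-assertion: $\mathrm{idx}(Q)=\mathrm{Idx}\setminus\{i\mid\forall\mathbf v,\mathbf s,s'.\ Q(\mathbf v)(\mathbf s)\Leftrightarrow Q(\mathbf v[i:\bot])(\mathbf s[i:s'])\}$, where $\mathbf v[i:\bot]$ makes $\mathbf v$ undefined at $i$ and $\mathbf s[i:s']$ is function update. *)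

(* Defs.v *)
From Stdlib Require Import ZArith.
Open Scope Z_scope.

Definition Val := Z.
Definition PVar := nat.
Definition Store := PVar -> Val.
Definition Idx := nat.

Inductive term : Type :=
| TVal : Val -> term
| TVar : PVar -> term
| TStar : term
| TOp : (Val -> Val -> Val) -> term -> term -> term
| TSkip : term
| TAssign : PVar -> term -> term
| TSeq : term -> term -> term
| TIf : term -> term -> term -> term
| TWhile : term -> term -> term.

Definition supd (s : Store) (x : PVar) (v : Val) : Store :=
  fun y => if Nat.eqb y x then v else s y.

(** Nondeterministic big-step semantics  t, s ⇓ v, s'.
    Conventions: skip and assignment return 0; a guard value v is "true"
    iff v <> 0; a terminated loop returns 0. *)
Inductive eval : term -> Store -> Val -> Store -> Prop :=
| EVal : forall v s, eval (TVal v) s v s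
| EVar : forall x s, eval (TVar x) s (s x) s
| EStar : forall v s, eval TStar s v s
| EOp : forall f t1 t2 s s1 s2 v1 v2,
    eval t1 s v1 s1 -> eval t2 s1 v2 s2 -> eval (TOp f t1 t2) s (f v1 v2) s2
| ESkip : forall s, eval TSkip s 0 s
| EAssign : forall x t s s1 v,
    eval t s v s1 -> eval (TAssign x t) s 0 (supd s1 x v)
| ESeq : forall t1 t2 s s1 s2 v1 v2,
    eval t1 s v1 s1 -> eval t2 s1 v2 s2 -> eval (TSeq t1 t2) s v2 s2
| EIfT : forall b t1 t2 s s1 s2 vb v,
    eval b s vb s1 -> vb <> 0 -> eval t1 s1 v s2 -> eval (TIf b t1 t2) s v s2
| EIfF : forall b t1 t2 s s1 s2 v,
    eval b s 0 s1 -> eval t2 s1 v s2 -> eval (TIf b t1 t2) s v s2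
| EWhileF : forall b t s s1,
    eval b s 0 s1 -> eval (TWhile b t) s 0 s1
| EWhileT : forall b t s s1 s2 s3 vb v1 v,
    eval b s vb s1 -> vb <> 0 -> eval t s1 v1 s2 ->
    eval (TWhile b t) s2 v s3 -> eval (TWhile b t) s v s3.

(** Hyper-objects. Partial maps are [Idx -> option _]; finiteness of the
    support is a separate predicate. *)
Definition hterm := Idx -> option term.
Definition hstore := Idx -> Store.
Definition hval := Idx -> option Val.

Definition finsupp {A : Type} (f : Idx -> option A) : Prop :=
  exists N : nat, forall i, (N <= i)%nat -> f i = None.

(** Union of partial maps (left-biased; meaningful when they agree). *)
Definition hplus {A : Type} (f g : Idx -> option A) : Idx -> option A :=
  fun i => match f i with Some a => Some a | None => g i end.

Definition agree_on_inter {A : Type} (f g : Idx -> option A) : Prop :=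
  forall i a b, f i = Some a -> g i = Some b -> a = b.

Definition hsem (t : hterm) (s : hstore) (v : hval) (s' : hstore) : Prop :=
  forall i, match t i with
            | Some ti => exists vi, v i = Some vi /\ eval ti (s i) vi (s' i)
            | None => s' i = s i /\ v i = None
            end.

Definition hassertion := hstore -> Prop.
(** Post hyper-assertions: only their values on finitely supported
    hyper-return-values matter; all quantifications over hyper-return-values
    below are restricted to finitely supported ones. *)
Definition postassertion := hval -> hassertion.

Definition upward_closed (Q : postassertion) : Prop :=
  forall (v v' : hval) (s : hstore), finsupp v -> finsupp v' ->
    Q v s -> (forall i x, v i = Some x -> v' i = Some x) -> Q v' s.

Definition entails (P R : hassertion) : Prop := forall s, P s -> R s.

Definition wp (t : hterm) (Q : postassertion) : hassertion :=
  fun s => forall v s', hsem t s v s' -> Q v s'.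

Definition vundef (v : hval) (i : Idx) : hval :=
  fun j => if Nat.eqb j i then None else v j.

Definition hsupd (s : hstore) (i : Idx) (st : Store) : hstore :=
  fun j => if Nat.eqb j i then st else s j.

Definition in_idx (Q : postassertion) (i : Idx) : Prop :=
  ~ (forall (v : hval) (s : hstore) (st : Store), finsupp v ->
       (Q v s <-> Q (vundef v i) (hsupd s i st))).

(* Main.v *)
Require Import Defs.
From Stdlib Require Import Classical FunctionalExtensionality Arith Lia.

Lemma key (T t1 : hterm) (Q : postassertion) s v s' :
  finsupp T -> upward_closed Q ->
  (forall i x, t1 i = Some x -> T i = Some x) ->
  (forall i, in_idx Q i -> T i <> None -> t1 i <> None) ->
  wp t1 Q s -> hsem T s v s' -> Q v s'.
Proof.
  intros [N HN] Hup Hsub Hidx Hwp Hs.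
  pose (v1 := (fun j => match t1 j with Some _ => v j | None => None end) : hval).
  pose (sn := (fun n j => if j <? n then s' j
                           else match t1 j with Some _ => s' j | None => s j end) : nat -> hstore).
  assert (Hfv : finsupp v).
  { exists N; intros i Hi. specialize (Hs i). rewrite (HN i Hi) in Hs. tauto. }
  assert (Hfv1 : finsupp v1).
  { exists N; intros i Hi. unfold v1. destruct (t1 i) eqn:E; auto.
    apply Hsub in E. rewrite HN in E; [discriminate|lia]. }
  assert (H0 : Q v1 (sn 0%nat)).
  { apply Hwp. intro i. unfold v1, sn. simpl. destruct (t1 i) eqn:E.
    - specialize (Hs i). rewrite (Hsub _ _ E) in Hs. exact Hs.
    - auto. }
  assert (Hstep : forall n, Q v1 (sn n) -> Q v1 (sn (S n))).
  { intros n Hq.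
    destruct (classic (t1 n = None /\ T n <> None)) as [[E1 E2]|Hn].
    - assert (Hni : ~ in_idx Q n) by (intro Hi; exact (Hidx n Hi E2 E1)).
      unfold in_idx in Hni. apply NNPP in Hni.
      apply (proj1 (Hni v1 (sn n) (s' n) Hfv1)) in Hq.
      replace (vundef v1 n) with v1 in Hq.
      2:{ extensionality j. unfold vundef, v1. destruct (Nat.eqb_spec j n); subst; auto.
          rewrite E1; auto. }
      replace (sn (S n)) with (hsupd (sn n) n (s' n)); auto.
      extensionality j. unfold hsupd, sn. destruct (Nat.eqb_spec j n).
      + subst. destruct (Nat.ltb_spec n (S n)); [auto|lia].
      + destruct (Nat.ltb_spec j n); destruct (Nat.ltb_spec j (S n)); auto; lia.
    - replace (sn (S n)) with (sn n); auto.
      extensionality j. unfold sn.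
      destruct (Nat.ltb_spec j n); destruct (Nat.ltb_spec j (S n)); auto; try lia.
      assert (j = n) by lia. subst.
      destruct (t1 n) eqn:E; auto.
      specialize (Hs n). destruct (T n) eqn:ET.
      + exfalso; apply Hn; split; auto; discriminate.
      + destruct Hs; auto. }
  assert (HN' : forall n, Q v1 (sn n)).
  { induction n; auto. }
  specialize (HN' N).
  replace (sn N) with s' in HN'.
  2:{ extensionality j. unfold sn. destruct (Nat.ltb_spec j N); auto.
      destruct (t1 j) eqn:E; auto. specialize (Hs j). rewrite (HN j) in Hs; [|lia].
      destruct Hs; auto. }
  apply (Hup v1 v s' Hfv1 Hfv HN').
  intros i x. unfold v1. destruct (t1 i); auto; discriminate.
Qed.

Theorem mainTheorem9 (t1 t2 : hterm) (Q1 Q2 : postassertion) :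
  finsupp t1 -> finsupp t2 ->
  upward_closed Q1 -> upward_closed Q2 ->
  agree_on_inter t1 t2 ->
  (forall i, in_idx Q1 i -> t2 i <> None -> t1 i <> None) ->
  (forall i, in_idx Q2 i -> t1 i <> None -> t2 i <> None) ->
  entails (fun s => wp t1 Q1 s /\ wp t2 Q2 s)
          (wp (hplus t1 t2) (fun r s => Q1 r s /\ Q2 r s)).
Proof.
  intros [N1 H1] [N2 H2] U1 U2 Ag I1 I2 s [W1 W2] v s' Hs.
  assert (Hf : finsupp (hplus t1 t2)).
  { exists (N1 + N2)%nat. intros i Hi. unfold hplus. rewrite H1, H2; auto; lia. }
  split.
  - apply (key (hplus t1 t2) t1 Q1 s v s' Hf U1); auto.
    + intros i x E. unfold hplus. rewrite E. auto.
    + intros i Hi HT E. unfold hplus in HT. rewrite E in HT. exact (I1 i Hi HT E).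
  - apply (key (hplus t1 t2) t2 Q2 s v s' Hf U2); auto.
    + intros i x E. unfold hplus. destruct (t1 i) eqn:E1; auto.
      f_equal. exact (Ag _ _ _ E1 E).
    + intros i Hi HT E. unfold hplus in HT. rewrite E in HT.
      destruct (t1 i) eqn:E1; [|exact (HT eq_refl)].
      apply (I2 i Hi); [rewrite E1; discriminate|exact E].
Qed.
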